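(* Let $(N,M,W,C,P,\overline{Q})$ be an MRS-situation and $(N,M,v)$ the corresponding MRS-game. Then $(N,M,v)$ is balanced, i.e. its core is nonempty.
   Context: An MRS-situation $(N,M,W,C,P,\overline{Q})$ consists of a finite set $N$ of retailers and a finite set $M$ of suppliers (distinct agents), and: for each $j\in M$ a unit production cost $c_j:[0,\infty)\to(0,\infty)$, decreasing and continuous with $c_j(q)q$ nondecreasing, and a wholesale price $w_j:[0,\infty)\to(0,\infty)$, nonincreasing and continuous, with $w_j(q)>c_j(q)$ for all $q\ge0$ and $w_j(q)q$ nondecreasing; for each $i\in N$ a selling price $p_i:[0,\infty)\to\mathbb{R}$, nonincreasing and continuous, with $p_i(0)>w_j(0)$ for all $j$, and $q_i^*>0$ with $p_i(q_i^* )=0$; and capacities $\overline{q}_{ij}\in(0,\infty)$. For an order matrix $q=(q_{ij})_{i\in R,j\in M}\ge0$: $q_{Rj}=\sum_{i\in R}q_{ij}$, $q_{iM}=\sum_{j}q_{ij}$, $q_{RS}=\sum_{j\in S}\sum_{i\in R}q_{ij}$, $q_i=(q_{ij})_j$, $q_R=(q_{Rj})_j$; $c_S(x)=\min_{j\in S}c_j(x)$. For $i\in R$: $\Pi_i(q_i,\Psi^S(q_R))=p_i(q_{iM})q_{iM}-\sum_{j\in S}c_S(q_{RS})q_{ij}-\sum_{j\in M\setminus S}w_j(q_{Rj})q_{ij}$. $\mathbb{Q}^R=\{q\in\mathbb{R}_+^{R\times M}: q_{iM}\le q_i^*,\ q_{ij}\le\overline{q}_{ij}\}$; $q^{(R,S)}$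 is an optimal solution of $\max\{\sum_{i\in R}\Pi_i(q_i,\Psi^S(q_R)):q\in\mathbb{Q}^R\}$. The MRS-game is the TU-game on player set $N\cup M$ with $v(R,S)=\sum_{i\in R}\Pi_i(q_i^{(R,S)},\Psi^S(q_R^{(R,S)}))$ for $\emptyset\ne R\subseteq N$, $S\subseteq M$ (value of coalition $R\cup S$), and $v(\emptyset,S)=0$. Its core is $\{x\in\mathbb{R}^{N\cup M}: \sum_{k\in N\cup M}x_k=v(N,M),\ \sum_{k\in R\cup S}x_k\ge v(R,S)\ \forall R\subseteq N, S\subseteq M\}$. *)

(* Defs.v *)
From HB Require Import structures.
From mathcomp Require Import all_boot all_order all_algebra.
From mathcomp Require Import all_classical all_reals all_analysis.
Set Implicit Arguments. Unset Strict Implicit. Unset Printing Implicit Defensive.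
Import Order.TTheory GRing.Theory Num.Theory numFieldNormedType.Exports.
Local Open Scope ring_scope.


Section MRS.
Variables (R : realType) (N M : finType).

Definition halfline : set R := [set x | 0 <= x]%classic.

Record mrs_data := MRSData {
  mc : M -> R -> R;      (* unit production cost c_j *)
  mw : M -> R -> R;      (* wholesale price w_j *)
  mp : N -> R -> R;      (* selling price p_i *)
  mqstar : N -> R;
  mqbar : N -> M -> R    (* capacities \overline{q}_{ij} *)
}.

Definition decreasing_on (f : R -> R) :=
  forall x y, 0 <= x -> x < y -> f y < f x.
Definition nonincreasing_on (f : R -> R) :=
  forall x y, 0 <= x -> x <= y -> f y <= f x.
Definition nondecreasing_on (f : R -> R) :=
  forall x y, 0 <= x -> x <= y -> f x <= f y.

Definition is_MRS_situation (D : mrs_data) : Prop :=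
  [/\ (forall j,
        [/\ (forall x, 0 <= x -> 0 < mc D j x),
            decreasing_on (mc D j),
            ({within halfline, continuous (mc D j)})%classic &
            nondecreasing_on (fun x => mc D j x * x)]),
      (forall j,
        [/\ (forall x, 0 <= x -> 0 < mw D j x),
            nonincreasing_on (mw D j),
            ({within halfline, continuous (mw D j)})%classic,
            (forall x, 0 <= x -> mc D j x < mw D j x) &
            nondecreasing_on (fun x => mw D j x * x)]),
      (forall i,
        [/\ nonincreasing_on (mp D i),
            ({within halfline, continuous (mp D i)})%classic,
            (forall j, mw D j 0 < mp D i 0),
            0 < mqstar D i &
            mp D i (mqstar D i) = 0]) &
      (forall i j, 0 < mqbar D i j)].

Definition qiM (q : N -> M -> R) (i : N) : R := \sum_(j : M) q i j.
Definition qRj (Rc : {set N}) (q : N -> M -> R) (j : M) : R :=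
  \sum_(i in Rc) q i j.
Definition qRS (Rc : {set N}) (S : {set M}) (q : N -> M -> R) : R :=
  \sum_(j in S) \sum_(i in Rc) q i j.

(* c_S(x) = min_{j in S} c_j(x)  (irrelevant, set to 0, when S is empty) *)
Definition cS (D : mrs_data) (S : {set M}) (x : R) : R :=
  if [pick j in S] is Some j0 then \big[Num.min/mc D j0 x]_(j in S) mc D j x
  else 0.

Definition profit (D : mrs_data) (Rc : {set N}) (S : {set M})
  (q : N -> M -> R) (i : N) : R :=
  mp D i (qiM q i) * qiM q i
  - \sum_(j in S) cS D S (qRS Rc S q) * q i j
  - \sum_(j in ~: S) mw D j (qRj Rc q j) * q i j.

Definition total_profit (D : mrs_data) (Rc : {set N}) (S : {set M})
  (q : N -> M -> R) : R :=
  \sum_(i in Rc) profit D Rc S q i.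

(* q in Q^R (only the rows i in R matter) *)
Definition feasible (D : mrs_data) (Rc : {set N}) (q : N -> M -> R) : Prop :=
  forall i, i \in Rc ->
    qiM q i <= mqstar D i /\
    (forall j, 0 <= q i j /\ q i j <= mqbar D i j).

Definition optimal (D : mrs_data) (Rc : {set N}) (S : {set M})
  (q : N -> M -> R) : Prop :=
  feasible D Rc q /\
  forall q', feasible D Rc q' -> total_profit D Rc S q' <= total_profit D Rc S q.

(* The MRS-game, built from a choice q^{(R,S)} of optimal solutions *)
Definition mrs_game (D : mrs_data)
  (qopt : {set N} -> {set M} -> N -> M -> R) (Rc : {set N}) (S : {set M}) : R :=
  if Rc == finset.set0 then 0 else total_profit D Rc S (qopt Rc S).

(* core of a TU-game on N ∪ M, coalitions R ∪ S, allocation (x, y) *)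
Definition in_core (v : {set N} -> {set M} -> R) (x : N -> R) (y : M -> R)
  : Prop :=
  \sum_(i : N) x i + \sum_(j : M) y j = v finset.setT finset.setT /\
  forall (Rc : {set N}) (S : {set M}),
    v Rc S <= \sum_(i in Rc) x i + \sum_(j in S) y j.

End MRS.

(* Main.v *)
Require Import Defs.
From HB Require Import structures.
From mathcomp Require Import all_boot all_order all_algebra.
From mathcomp Require Import all_classical all_reals all_analysis.
From mathcomp Require Import lra.
Import Order.TTheory GRing.Theory Num.Theory numFieldNormedType.Exports.
Local Open Scope ring_scope.
Set Implicit Arguments. Unset Strict Implicit.

Lemma sum_split (R : realType) (I : finType) (A : {set I}) (F : I -> R) :
  \sum_i F i = \sum_(i in A) F i + \sum_(i in ~: A) F i.
Proof.
rewrite (bigID (mem A)) /=; congr (_ + _); apply: eq_bigl => i //.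
by rewrite finset.in_setC.
Qed.

Lemma sum_setT (R : realType) (I : finType) (F : I -> R) :
  \sum_(i in finset.setT) F i = \sum_i F i.
Proof. by apply: eq_bigl => i; rewrite finset.in_setT. Qed.

Lemma cS_le (R : realType) (N M : finType) (D : mrs_data R N M) (S : {set M}) (j : M) (x : R) :
  j \in S -> cS D S x <= mc D j x.
Proof.
move=> Hj; rewrite /cS; case: pickP => [j0 Hj0|H]; last by rewrite H in Hj.
by rewrite (bigD1 j) //= ge_min lexx.
Qed.

Lemma cS_ge (R : realType) (N M : finType) (D : mrs_data R N M) (S : {set M}) (a x : R) :
  (exists j, j \in S) -> (forall j, j \in S -> a <= mc D j x) -> a <= cS D S x.
Proof.
move=> [j1 Hj1] Hall; rewrite /cS; case: pickP => [j0 Hj0|H]; last by rewrite H in Hj1.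
apply: (big_ind (fun y => a <= y)); first exact: Hall.
  by move=> y z Hy Hz; rewrite le_min Hy Hz.
by move=> j Hj; apply: Hall.
Qed.

Lemma cM_ge0 (R : realType) (N M : finType) (D : mrs_data R N M) (x : R) :
  is_MRS_situation D -> 0 <= x -> 0 <= cS D finset.setT x.
Proof.
move=> [Hc _ _ _] Hx; rewrite /cS; case: pickP => [j0 _|_ //].
apply: (big_ind (fun y => 0 <= y)).
- by case: (Hc j0) => /(_ x Hx) /ltW.
- by move=> y z Hy Hz; rewrite le_min Hy Hz.
- by move=> j _; case: (Hc j) => /(_ x Hx) /ltW.
Qed.

Lemma mc_noninc (R : realType) (N M : finType) (D : mrs_data R N M) (j : M) (a b : R) :
  is_MRS_situation D -> 0 <= a -> a <= b -> mc D j b <= mc D j a.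
Proof.
move=> [Hc _ _ _] Ha Hab; case: (Hc j) => _ Hd _ _.
move: Hab; rewrite le_eqVlt => /orP [/eqP -> //| Hlt].
exact: ltW (Hd _ _ Ha Hlt).
Qed.

Lemma cM_noninc (R : realType) (N M : finType) (D : mrs_data R N M) (a b : R) :
  is_MRS_situation D -> 0 <= a -> a <= b ->
  cS D finset.setT b <= cS D finset.setT a.
Proof.
move=> H Ha Hab.
case E: [pick j in [set: M]] => [j0|]; last by rewrite /cS E.
apply: cS_ge; first by exists j0; rewrite finset.in_setT.
move=> j _; apply: le_trans (@cS_le _ _ _ D _ j b (finset.in_setT j)) _.
exact: mc_noninc.
Qed.

Lemma qRS_T (R : realType) (N M : finType) (Rc : {set N}) (q : N -> M -> R) :
  qRS Rc finset.setT q = \sum_(k in Rc) qiM q k.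
Proof.
rewrite /qRS exchange_big /=; apply: eq_bigr => k _; rewrite /qiM sum_setT //.
Qed.

Lemma qRS_alt (R : realType) (N M : finType) (Rc : {set N}) (q : N -> M -> R) :
  \sum_(k in Rc) qiM q k = \sum_j qRj Rc q j.
Proof. by rewrite /qiM /qRj exchange_big. Qed.

Lemma profitT (R : realType) (N M : finType) (D : mrs_data R N M)
  (Rc : {set N}) (q : N -> M -> R) (i : N) :
  profit D Rc finset.setT q i = mp D i (qiM q i) * qiM q i
    - cS D finset.setT (\sum_(k in Rc) qiM q k) * qiM q i.
Proof.
rewrite /profit qRS_T finset.setCT big_set0 subr0 -mulr_sumr sum_setT //.
Qed.

Lemma qRj_ge0 (R : realType) (N M : finType) (D : mrs_data R N M)
  (Rc : {set N}) (q : N -> M -> R) j :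
  feasible D Rc q -> 0 <= qRj Rc q j.
Proof. by move=> Hf; apply: sumr_ge0 => k Hk; case: (Hf k Hk) => _ /(_ j) []. Qed.

Lemma profit_mono (R : realType) (N M : finType) (D : mrs_data R N M)
  (Rc : {set N}) (S : {set M}) (q : N -> M -> R) (i : N) :
  is_MRS_situation D -> feasible D Rc q -> i \in Rc ->
  profit D Rc S q i <= profit D Rc finset.setT q i.
Proof.
move=> H Hf Hi; rewrite profitT /profit -addrA -opprD lerD2l lerN2.
set QT := \sum_(k in Rc) qiM q k.
have Hq : forall j, 0 <= q i j by move=> j; case: (Hf i Hi) => _ /(_ j) [].
have HRj0 : forall j, 0 <= qRj Rc q j by move=> j; exact: qRj_ge0 Hf.
have HRj : forall j, qRj Rc q j <= QT.
  move=> j; rewrite /QT qRS_alt (bigD1 j) //= lerDl; apply: sumr_ge0 => k _; exact: HRj0.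
have HS0 : 0 <= qRS Rc S q by apply: sumr_ge0 => j _; exact: HRj0.
have HS : qRS Rc S q <= QT.
  rewrite /QT qRS_alt (sum_split S) lerDl; apply: sumr_ge0 => k _; exact: HRj0.
have HQT0 : 0 <= QT by apply: le_trans HS.
rewrite /qiM mulr_sumr.
apply: (@le_trans _ _ (\sum_j (if j \in S then cS D S (qRS Rc S q) * q i j
                           else mw D j (qRj Rc q j) * q i j))); last first.
  rewrite (sum_split S); apply: lerD; rewrite le_eqVlt; apply/orP; left; apply/eqP; apply: eq_bigr => j Hj.
    by rewrite Hj.
  by move: Hj; rewrite finset.in_setC => /negbTE ->.
apply: ler_sum => j _.
case: ifP => Hj; apply: ler_wpM2r => //.
  apply: cS_ge; first by exists j.
  move=> k Hk; apply: le_trans (@cM_noninc _ _ _ D _ _ H HS0 HS) _.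
  exact: cS_le.
apply: le_trans (@cS_le _ _ _ D _ j _ (finset.in_setT j)) _.
apply: le_trans (@mc_noninc _ _ _ D j _ _ H (HRj0 j) (HRj j)) _.
by case: H => _ Hw _ _; case: (Hw j) => _ _ _ /(_ _ (HRj0 j)) /ltW.
Qed.

Definition tq (R : realType) (N M : finType)
  (qopt : {set N} -> {set M} -> N -> M -> R) (Rc : {set N}) (i : N) : R :=
  qiM (qopt Rc finset.setT) i.

Definition gfun (R : realType) (N M : finType) (D : mrs_data R N M)
  (qopt : {set N} -> {set M} -> N -> M -> R) (i : N) (p : R) : R :=
  \big[Num.max/0]_(Rc : {set N} | i \in Rc)
     (mp D i (tq qopt Rc i) * tq qopt Rc i - p * tq qopt Rc i).

Definition rowok (R : realType) (N M : finType) (D : mrs_data R N M) (i : N)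
  (w : M -> R) : Prop :=
  (\sum_j w j <= mqstar D i) /\ (forall j, 0 <= w j /\ w j <= mqbar D i j).

Lemma g_ge0 (R : realType) (N M : finType) (D : mrs_data R N M) qopt i p :
  0 <= gfun D qopt i p.
Proof.
exact: bigmax_ge_id.
Qed.

Lemma g_ub (R : realType) (N M : finType) (D : mrs_data R N M) qopt i p
  (Rc : {set N}) : i \in Rc ->
  mp D i (tq qopt Rc i) * tq qopt Rc i - p * tq qopt Rc i <= gfun D qopt i p.
Proof. by move=> Hi; rewrite /gfun; apply: (le_bigmax_cond _ (fun Rc => _)). Qed.

Lemma feas_row (R : realType) (N M : finType) (D : mrs_data R N M) Rc q i :
  feasible D Rc q -> i \in Rc -> rowok D i (q i).
Proof. by move=> Hf Hi; case: (Hf i Hi). Qed.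

Lemma g_attain (R : realType) (N M : finType) (D : mrs_data R N M) qopt i p :
  is_MRS_situation D ->
  (forall (Rc : {set N}) (S : {set M}), Rc != finset.set0 -> optimal D Rc S (qopt Rc S)) ->
  exists w, rowok D i w /\
    gfun D qopt i p = mp D i (\sum_j w j) * (\sum_j w j) - p * (\sum_j w j).
Proof.
move=> H Hopt.
apply: (big_ind (fun y => exists w, rowok D i w /\
    y = mp D i (\sum_j w j) * (\sum_j w j) - p * (\sum_j w j))).
- exists (fun _ => 0); split.
    split; first by rewrite big1 //; case: H => _ _ /(_ i) [] _ _ _ /ltW.
    by move=> j; rewrite lexx; case: H => _ _ _ /(_ i j) /ltW.
  by rewrite big1 // !mulr0 subr0.
- move=> y z [w1 [Hw1 ->]] [w2 [Hw2 ->]].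
  case: (leP (mp D i (\sum_j w1 j) * \sum_j w1 j - p * \sum_j w1 j)
             (mp D i (\sum_j w2 j) * \sum_j w2 j - p * \sum_j w2 j)) => Hle.
    by exists w2.
  by exists w1.
- move=> Rc Hi; exists (qopt Rc finset.setT i); split => //.
  have Hne : Rc != finset.set0 by apply/set0Pn; exists i.
  by case: (Hopt Rc finset.setT Hne) => Hf _; apply: feas_row Hf Hi.
Qed.

Lemma tq_ge0 (R : realType) (N M : finType) (D : mrs_data R N M) qopt (Rc : {set N}) (i : N) :
  (forall (Rc : {set N}) (S : {set M}), Rc != finset.set0 -> optimal D Rc S (qopt Rc S)) ->
  i \in Rc -> 0 <= tq qopt Rc i.
Proof.
move=> Hopt Hi; have Hne : Rc != finset.set0 by apply/set0Pn; exists i.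
case: (Hopt Rc finset.setT Hne) => Hf _; apply: sumr_ge0 => j _.
by case: (Hf i Hi) => _ /(_ j) [].
Qed.

Lemma g_le0 (R : realType) (N M : finType) (D : mrs_data R N M) qopt i p :
  is_MRS_situation D ->
  (forall (Rc : {set N}) (S : {set M}), Rc != finset.set0 -> optimal D Rc S (qopt Rc S)) ->
  mp D i 0 <= p -> gfun D qopt i p <= 0.
Proof.
move=> H Hopt Hp.
apply: (big_ind (fun y => y <= 0)) => //.
  by move=> y z Hy Hz; rewrite ge_max Hy Hz.
move=> Rc Hi; rewrite -mulrBl; have Ht := tq_ge0 Hopt Hi.
apply: mulr_le0_ge0 => //; rewrite subr_le0; apply: le_trans Hp.
by case: H => _ _ /(_ i) [] Hni _ _ _ _ _; exact: (Hni 0 _ (lexx 0) Ht).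
Qed.

Lemma cont_bigmax (R : realType) (I : Type) (s : seq I) (P : pred I)
  (F : I -> R -> R) : (forall i, continuous (F i)) ->
  continuous (fun x : R => \big[Num.max/0]_(i <- s | P i) F i x).
Proof.
move=> HF; elim: s => [|a s IH].
  by under eq_fun do rewrite big_nil; exact: cst_continuous.
under eq_fun do rewrite big_cons.
case: (P a) => //.
exact: (max_fun_continuous (HF a) IH).
Qed.

Lemma cont_sum (R : realType) (I : Type) (s : seq I) (P : pred I)
  (F : I -> R -> R) : (forall i, continuous (F i)) ->
  continuous (fun x : R => \sum_(i <- s | P i) F i x).
Proof.
move=> HF; elim: s => [|a s IH].
  by under eq_fun do rewrite big_nil; exact: cst_continuous.
under eq_fun do rewrite big_cons.
case: (P a) => //.
move=> x; apply: continuousD; [exact: HF | exact: IH].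
Qed.

Lemma g_cont (R : realType) (N M : finType) (D : mrs_data R N M) qopt i :
  continuous (gfun D qopt i).
Proof.
apply: cont_bigmax => Rc x.
apply: (@continuousB _ R^o _ (fun=> _) (fun x0 : R => x0 * _)).
  exact: cst_continuous.
apply: (@continuousM _ _ (fun x0 : R => x0) (fun=> _)).
  exact: cvg_id.
exact: cst_continuous.
Qed.

Lemma qiM_ge0 (R : realType) (N M : finType) (D : mrs_data R N M) Rc q i :
  feasible D Rc q -> i \in Rc -> 0 <= qiM q i.
Proof. by move=> Hf Hi; apply: sumr_ge0 => j _; case: (Hf i Hi) => _ /(_ j) []. Qed.

Lemma key (R : realType) (N M : finType) (D : mrs_data R N M)
  (qopt : {set N} -> {set M} -> N -> M -> R) (p : R) :
  is_MRS_situation D ->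
  (forall (Rc : {set N}) (S : {set M}), Rc != finset.set0 -> optimal D Rc S (qopt Rc S)) ->
  \sum_i gfun D qopt i p = mrs_game D qopt finset.setT finset.setT ->
  forall Rc : {set N}, Rc != finset.set0 ->
  total_profit D Rc finset.setT (qopt Rc finset.setT) <= \sum_(i in Rc) gfun D qopt i p.
Proof.
move=> H Hopt HG Rc Hne.
set q := qopt Rc finset.setT.
have [Hf _] := Hopt Rc finset.setT Hne.
rewrite /total_profit.
under eq_bigr => i _ do rewrite profitT.
set T := \sum_(k in Rc) qiM q k.
have HT0 : 0 <= T by apply: sumr_ge0 => k Hk; exact: qiM_ge0 Hf Hk.
case: (leP p (cS D finset.setT T)) => Hp.
  apply: ler_sum => i Hi; apply: le_trans (g_ub D qopt p Hi).
  rewrite lerD2l lerN2; apply: ler_wpM2r => //; exact: qiM_ge0 Hf Hi.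
have [f Hf'] := choice (fun j => @g_attain _ _ _ D qopt j p H Hopt).
pose Q := fun i => if i \in Rc then q i else f i.
have HQf : feasible D finset.setT Q.
  move=> i _; rewrite /qiM /Q; case: ifP => Hi; first by case: (Hf i Hi).
  by case: (Hf' i) => [[Hs Hb] _]; split.
have HsetT : (finset.setT : {set N}) != finset.set0.
  by case/set0Pn: Hne => i Hi; apply/set0Pn; exists i; rewrite finset.in_setT.
have [_ Hmax] := Hopt finset.setT finset.setT HsetT.
have Hle := Hmax Q HQf.
have HUN : mrs_game D qopt finset.setT finset.setT =
    total_profit D finset.setT finset.setT (qopt finset.setT finset.setT).
  by rewrite /mrs_game (negbTE HsetT).
set X := \sum_(k in finset.setT) qiM Q k.
have EQ : total_profit D finset.setT finset.setT Q =
   \sum_i (mp D i (qiM Q i) * qiM Q i - cS D finset.setT X * qiM Q i).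
  by rewrite /total_profit sum_setT; apply: eq_bigr => i _; rewrite profitT.
move: Hle; rewrite -HUN -HG EQ.
have HQin : forall i, i \in Rc -> qiM Q i = qiM q i.
  by move=> i Hi; rewrite /qiM /Q Hi.
have HQout : forall i, i \notin Rc -> qiM Q i = \sum_j f i j.
  by move=> i Hi; rewrite /qiM /Q (negbTE Hi).
have HXT : T <= X.
  rewrite /X sum_setT (sum_split Rc) /T.
  have -> : \sum_(k in Rc) qiM Q k = \sum_(k in Rc) qiM q k.
    by apply: eq_bigr => k Hk; rewrite HQin.
  rewrite lerDl; apply: sumr_ge0 => k Hk.
  rewrite HQout; last by rewrite finset.in_setC in Hk.
  by apply: sumr_ge0 => j _; case: (Hf' k) => [[_ Hb] _]; case: (Hb j).
have HcX : cS D finset.setT X <= cS D finset.setT T by exact: cM_noninc.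
rewrite !(sum_split Rc) => Hle.
have H1 : \sum_(i in Rc) (mp D i (qiM q i) * qiM q i - cS D finset.setT T * qiM q i)
   <= \sum_(i in Rc) (mp D i (qiM Q i) * qiM Q i - cS D finset.setT X * qiM Q i).
  apply: ler_sum => i Hi; rewrite HQin //.
  rewrite lerD2l lerN2; apply: ler_wpM2r => //; exact: qiM_ge0 Hf Hi.
have H2 : \sum_(i in ~: Rc) gfun D qopt i p
   <= \sum_(i in ~: Rc) (mp D i (qiM Q i) * qiM Q i - cS D finset.setT X * qiM Q i).
  apply: ler_sum => i Hi; rewrite finset.in_setC in Hi.
  rewrite HQout //; case: (Hf' i) => [[_ Hb] ->].
  rewrite lerD2l lerN2; apply: ler_wpM2r.
    by apply: sumr_ge0 => j _; case: (Hb j).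
  by apply: le_trans HcX (ltW Hp).
move: H1 H2 Hle; set A := \sum_(i in Rc) _; set B := \sum_(i in ~: Rc) gfun D qopt i p.
set C := \sum_(i in Rc) _; set E := \sum_(i in ~: Rc) _; set F := \sum_(i in Rc) _.
move=> H1 H2 Hle.
lra.
Qed.

Unset Implicit Arguments. Set Strict Implicit.

Theorem theorem1 (R : realType) (N M : finType) (D : mrs_data R N M)
  (qopt : {set N} -> {set M} -> N -> M -> R) :
  is_MRS_situation D ->
  (forall (Rc : {set N}) (S : {set M}), Rc != finset.set0 -> optimal D Rc S (qopt Rc S)) ->
  exists (x : N -> R) (y : M -> R), in_core (mrs_game D qopt) x y.
Proof.
move=> H Hopt.
set UN := mrs_game D qopt finset.setT finset.setT.
pose G := fun p => \sum_i gfun D qopt i p.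
have HUN0 : 0 <= UN.
  rewrite /UN /mrs_game; case: ifP => // Hne; move/negbT: Hne => Hne.
  have [_ Hmax] := Hopt finset.setT finset.setT Hne.
  have Hz : feasible D finset.setT (fun _ _ => 0).
    move=> i _; split.
      by rewrite /qiM big1 //; case: H => _ _ /(_ i) [] _ _ _ /ltW.
    by move=> j; rewrite lexx; case: H => _ _ _ /(_ i j) /ltW.
  apply: le_trans (Hmax _ Hz).
  suff -> : total_profit D finset.setT finset.setT (fun _ _ => 0) = 0 by [].
  rewrite /total_profit big1 // => i _; rewrite /profit /qiM big1 // mulr0.
  by rewrite !big1 ?subr0 // => j _; rewrite mulr0.
have HG0 : UN <= G 0.
  rewrite /UN /mrs_game; case: ifP => Hne.
    by apply: sumr_ge0 => i _; exact: g_ge0.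
  move/negbT: Hne => Hne.
  have [Hf _] := Hopt finset.setT finset.setT Hne.
  rewrite /total_profit sum_setT /G; apply: ler_sum => i _.
  apply: le_trans (g_ub D qopt 0 (finset.in_setT i)).
  rewrite profitT mul0r subr0 gerBl; apply: mulr_ge0.
    apply: cM_ge0 => //; apply: sumr_ge0 => k _; apply: qiM_ge0 Hf _.
    by rewrite finset.in_setT.
  by apply: qiM_ge0 Hf _; rewrite finset.in_setT.
pose B := \sum_i `|mp D i 0|.
have HB0 : 0 <= B by apply: sumr_ge0 => i _.
have HGB : G B <= UN.
  apply: le_trans HUN0; apply: sumr_le0 => i _; apply: g_le0 => //.
  rewrite /B (bigD1 i) //=; apply: le_trans (ler_norm _) _.
  by rewrite lerDl; apply: sumr_ge0.
have Hcont : {within `[0, B], continuous G}%classic.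
  have HGc : continuous G.
    rewrite /G; apply: cont_sum => i; exact: g_cont.
  exact: continuous_subspaceT HGc.
have [p _ Hp] : exists2 p, p \in `[0, B] & G p = UN.
  apply: IVT => //; apply/andP; split.
    by rewrite ge_min HGB orbT.
  by rewrite le_max HG0.
exists (fun i => gfun D qopt i p), (fun _ => 0); split.
  by rewrite big1_eq addr0.
move=> Rc S; rewrite big1_eq addr0.
case: (eqVneq Rc finset.set0) => [->|Hne].
  by rewrite /mrs_game eqxx; apply: sumr_ge0 => i _; exact: g_ge0.
rewrite /mrs_game (negbTE Hne).
have [HfS _] := Hopt Rc S Hne.
have [_ HmT] := Hopt Rc finset.setT Hne.
apply: le_trans (key H Hopt Hp Hne).
apply: le_trans (HmT _ HfS).
by apply: ler_sum => i Hi; apply: profit_mono.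
Qed.
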